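(* Let $\mathbf v\in\mathbb R_{<0}^{n\times m}$. For every Pareto optimal utility profile $\mathbf u\in\mathcal U^*(\mathbf v)$ there exists an allocation $\mathbf z$ with $\mathbf u(\mathbf z)=\mathbf u$ and $G_{\mathbf z}\in\mathrm{MWW}(\mathbf v)$. Consequently, for every $\mathbf b\in\mathbb R^n_{<0}$ and every competitive utility profile $\mathbf u\in\mathrm{CU}(\mathbf v,\mathbf b)$ there is a competitive allocation $\mathbf z$ with $\mathbf u(\mathbf z)=\mathbf u$ and $G_{\mathbf z}\in\mathrm{MWW}(\mathbf v)$.
   Context: Setup: agents $[n]$, chores $[m]$, allocations $\mathbf z\in\mathbb R^{n\times m}_{\ge0}$ with column sums $1$, $u_i(\mathbf z_i)=\sum_jv_{i,j}z_{i,j}$. $\mathcal U^*(\mathbf v)$ is the set of utility profiles $\mathbf u(\mathbf z)$ of Pareto optimal allocations $\mathbf z$. Consumption graph $G_{\mathbf z}$: edge $(i,j)$ iff $z_{i,j}>0$. $G_\tau(\mathbf v)$ for $\tau\in\mathbb R^n_{>0}$: edge $(i,j)$ iff $\tau_i|v_{i,j}|\le\tau_{i'}|v_{i',j}|$ for all $i'$; $\mathrm{MWW}(\mathbf v)=\{G_\tau(\mathbf v):\tau\in\mathbb R^n_{>0}\}$. Competitive allocation for budgets $\mathbf b\in\mathbb R^n_{<0}$: there exist prices $\mathbf p\in\mathbb R^m_{<0}$ such that each $\mathbf z_i$ maximizes $u_i$ over bundles $\mathbf x\in\mathbb R^m_{\ge0}$ with $\sum_jp_jx_j\le b_i$; $\mathrm{CU}(\mathbf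 v,\mathbf b)$ is the set of their utility profiles. *)

(* Defs.v *)
(* Reals are modelled by an arbitrary real closed field R
   (the statement is first-order for fixed n, m, so this is a faithful
   generalization of the statement over the reals). *)
From HB Require Import structures.
From mathcomp Require Import all_boot all_order all_algebra.
Set Implicit Arguments. Unset Strict Implicit. Unset Printing Implicit Defensive.
Import Order.TTheory GRing.Theory Num.Theory.
Local Open Scope ring_scope.

Section Defs.
Variables (R : rcfType) (n m : nat).

Definition is_alloc (z : 'M[R]_(n, m)) : Prop :=
  (forall i j, 0 <= z i j) /\ (forall j, \sum_(i < n) z i j = 1).

Definition util (v z : 'M[R]_(n, m)) : {ffun 'I_n -> R} :=
  [ffun i => \sum_(j < m) v i j * z i j].

Definition pareto_opt (v z : 'M[R]_(n, m)) : Prop :=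
  is_alloc z /\
  ~ (exists z', is_alloc z' /\ (forall i, util v z i <= util v z' i) /\
                 (exists i, util v z i < util v z' i)).

Definition in_Ustar (v : 'M[R]_(n, m)) (u : {ffun 'I_n -> R}) : Prop :=
  exists z, pareto_opt v z /\ util v z = u.

Definition cons_graph (z : 'M[R]_(n, m)) : {set 'I_n * 'I_m} :=
  [set e | 0 < z e.1 e.2].

Definition G_tau (v : 'M[R]_(n, m)) (tau : 'I_n -> R) : {set 'I_n * 'I_m} :=
  [set e | [forall i' : 'I_n,
             tau e.1 * `|v e.1 e.2| <= tau i' * `|v i' e.2|]].

Definition in_MWW (v : 'M[R]_(n, m)) (G : {set 'I_n * 'I_m}) : Prop :=
  exists tau : 'I_n -> R, (forall i, 0 < tau i) /\ G = G_tau v tau.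

Definition competitive (v : 'M[R]_(n, m)) (b : 'I_n -> R) (z : 'M[R]_(n, m))
  : Prop :=
  is_alloc z /\
  exists p : 'I_m -> R, (forall j, p j < 0) /\
    forall i,
      (\sum_(j < m) p j * z i j <= b i) /\
      (forall x : 'I_m -> R, (forall j, 0 <= x j) ->
         \sum_(j < m) p j * x j <= b i ->
         \sum_(j < m) v i j * x j <= util v z i).

Definition in_CU (v : 'M[R]_(n, m)) (b : 'I_n -> R) (u : {ffun 'I_n -> R})
  : Prop :=
  exists z, competitive v b z /\ util v z = u.

End Defs.

(* Main.v *)
Require Import Defs.
From HB Require Import structures.
From mathcomp Require Import all_boot all_order all_algebra.
Import Order.TTheory GRing.Theory Num.Theory.
Local Open Scope ring_scope.
From mathcomp Require Import ring lra.
From Stdlib Require Import ClassicalEpsilon Classical.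
Set Implicit Arguments. Unset Strict Implicit. Unset Printing Implicit Defensive.

Section Min.
Variables (R : realDomainType) (T : eqType).
Definition fmin (P : T -> bool) (F : T -> R) (x0 : R) (s : seq T) :=
  foldr (fun t acc => if P t then Num.min (F t) acc else acc) x0 s.

Lemma fmin_le_x0 (P : T -> bool) (F : T -> R) x0 s : fmin P F x0 s <= x0.
Proof.
elim: s => [|t s IH] /=; first by [].
case: (P t); [by rewrite ge_min IH orbT | exact: IH].
Qed.

Lemma fmin_le (P : T -> bool) (F : T -> R) x0 s t : t \in s -> P t -> fmin P F x0 s <= F t.
Proof.
elim: s => [|t' s IH] //=; rewrite in_cons => /orP [/eqP <- | ts] Pt.
  by rewrite Pt ge_min lexx.
case: (P t'); [by rewrite ge_min IH ?orbT | exact: IH].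
Qed.

Lemma fmin_att (P : T -> bool) (F : T -> R) x0 s :
  fmin P F x0 s = x0 \/ exists t, P t /\ fmin P F x0 s = F t.
Proof.
elim: s => [|t s IH] /=; first by left.
case Pt: (P t) => //.
rewrite /Num.min; case: ifP => _; first by right; exists t.
exact: IH.
Qed.

Lemma fmin_gt0 (P : T -> bool) (F : T -> R) x0 s : 0 < x0 -> (forall t, P t -> 0 < F t) -> 0 < fmin P F x0 s.
Proof.
move=> h0 hF; elim: s => [|t s IH] //=.
case Pt: (P t) => //; rewrite lt_min IH andbT; exact: hF.
Qed.
End Min.

Fixpoint allseqs (T : finType) (k : nat) : seq (seq T) :=
  if k is k'.+1 then [::] :: [seq t :: s | t <- enum T, s <- allseqs T k']
  else [:: [::]].

Lemma mem_allseqs (T : finType) k (s : seq T) : (size s <= k)%N -> s \in allseqs T k.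
Proof.
elim: k s => [|k IH] [|t s] //=.
move=> hs; rewrite in_cons; apply/orP; right.
apply: (allpairs_f (fun t s => t :: s)); first by rewrite mem_enum.
exact: IH.
Qed.

Section Paths.
Variables (R : rcfType) (n m : nat) (v zs : 'M[R]_(n, m)).
Hypothesis hv : forall i j, v i j < 0.

Local Notation a i j := `|v i j|.
Lemma a_gt0 i j : 0 < a i j.
Proof. by rewrite normr_gt0 lt_eqF ?hv. Qed.
Lemma v_a i j : v i j = - a i j.
Proof. by rewrite ler0_norm ?opprK // ltW. Qed.

Fixpoint pvalid (x : 'I_n) (s : seq ('I_n * 'I_m)) : bool :=
  if s is (y, j) :: s' then (0 < zs x j) && pvalid y s' else true.
Fixpoint prodp (x : 'I_n) (s : seq ('I_n * 'I_m)) : R :=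
  if s is (y, j) :: s' then (a y j / a x j) * prodp y s' else 1.
Definition lastp (x : 'I_n) (s : seq ('I_n * 'I_m)) := last x (map fst s).
Fixpoint delta (x : 'I_n) (g : R) (s : seq ('I_n * 'I_m)) : 'M[R]_(n, m) :=
  if s is (y, j) :: s' then
    (g / a x j) *: (delta_mx y j - delta_mx x j) + delta y (g / a x j * a y j) s'
  else 0.

Lemma prodp_gt0 x s : 0 < prodp x s.
Proof.
elim: s x => [|[y j] s IH] x //=.
by rewrite mulr_gt0 // divr_gt0 // a_gt0.
Qed.

Lemma sum_delta1 (F : 'I_m -> R) (i y : 'I_n) (j : 'I_m) :
  \sum_(k < m) F k * ((i == y) && (k == j))%:R = F j * (i == y)%:R.
Proof.
rewrite (bigD1 j) //= eqxx andbT big1 ?addr0 // => k /negbTE ->.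
by rewrite andbF mulr0.
Qed.

Lemma util_delta s x g i :
  \sum_(k < m) v i k * delta x g s i k =
  g * (i == x)%:R - g * prodp x s * (i == lastp x s)%:R.
Proof.
elim: s x g => [|[y j] s IH] x g /=.
  by rewrite /lastp /= big1 ?mulr1 ?subrr // => k _; rewrite mxE mulr0.
have -> : \sum_(k < m) v i k * ((g / a x j) *: (delta_mx y j - delta_mx x j)
             + delta y (g / a x j * a y j) s) i k
   = (g / a x j) * (v i j * (i == y)%:R - v i j * (i == x)%:R)
     + \sum_(k < m) v i k * delta y (g / a x j * a y j) s i k.
  rewrite -sum_delta1 -sum_delta1 -sumrB mulr_sumr -big_split /=.
  apply: eq_bigr => k _; rewrite !mxE; ring.
rewrite IH /lastp /=.
have k1 : v i j * (i == y)%:R = - a y j * (i == y)%:R.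
  by case: (eqVneq i y) => [->|_]; [rewrite {1}v_a | rewrite !mulr0].
have k2 : v i j * (i == x)%:R = - a x j * (i == x)%:R.
  by case: (eqVneq i x) => [->|_]; [rewrite {1}v_a | rewrite !mulr0].
rewrite k1 k2.
have hax : a x j != 0 by rewrite lt0r_neq0 // a_gt0.
by field.
Qed.

Lemma sum_delta1' (y : 'I_n) : \sum_(i < n) (i == y)%:R = 1 :> R.
Proof. by rewrite (bigD1 y) //= eqxx big1 ?addr0 // => i /negbTE ->. Qed.

Lemma colsum_delta s x g j : \sum_(i < n) delta x g s i j = 0.
Proof.
elim: s x g => [|[y k] s IH] x g /=; first by rewrite big1 // => i _; rewrite mxE.
under eq_bigr => i _ do rewrite !mxE.
rewrite big_split /=.
rewrite IH; rewrite addr0 -mulr_sumr sumrB.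
clear IH.
case: (eqVneq j k) => [<-|_]; last first.
  by rewrite !big1 ?subrr ?mulr0 // => i _; rewrite andbF.
under eq_bigr => i _ do rewrite andbT.
under [X in _ - X]eq_bigr => i _ do rewrite andbT.
by rewrite !sum_delta1' subrr mulr0.
Qed.

Lemma delta_neg s x g i j : 0 < g -> pvalid x s -> delta x g s i j < 0 -> 0 < zs i j.
Proof.
elim: s x g => [|[y k] s IH] x g hg /=; first by rewrite mxE ltxx.
move=> /andP [hx hs]; rewrite !mxE.
have ht : 0 < g / a x k by rewrite divr_gt0 // a_gt0.
have hg' : 0 < g / a x k * a y k by rewrite mulr_gt0 // a_gt0.
case hb : ((i == x) && (j == k)); first by case/andP: hb => /eqP -> /eqP -> _.
rewrite subr0 => h; apply: (IH y (g / a x k * a y k)) => //.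
rewrite ltNge; apply/negP => h2; move: h; rewrite ltNge => /negP; apply.
by rewrite addr_ge0 // mulr_ge0 ?ler0n // ltW.
Qed.

Lemma delta_target s x g y j : 0 < g -> pvalid x ((y, j) :: s) -> ~ 0 < zs y j ->
  0 < delta x g ((y, j) :: s) y j.
Proof.
move=> hg /= /andP [hx hs] hy; rewrite !mxE !eqxx /=.
have nyx : y != x by apply/eqP => e; apply: hy; rewrite e.
rewrite (negbTE nyx) subr0 mulr1.
have ht : 0 < g / a x j by rewrite divr_gt0 // a_gt0.
rewrite ltr_wpDr //; rewrite leNgt; apply/negP => h; apply: hy.
apply: (delta_neg (g := g / a x j * a y j) _ hs h).
by rewrite mulr_gt0 // a_gt0.
Qed.

Hypothesis zs_alloc : is_alloc zs.
Hypothesis zs_po : forall w, is_alloc w -> (forall i, util v zs i <= util v w i) ->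
  forall i, util v w i <= util v zs i.
Hypothesis zs_max : forall w, is_alloc w -> util v w = util v zs ->
  forall i j, 0 < w i j -> 0 < zs i j.

Lemma cycle_w x s : pvalid x s -> lastp x s = x ->
  exists2 c, 0 < c & exists w, is_alloc w /\
   (forall i, util v w i = util v zs i + c * (1 - prodp x s) * (i == x)%:R) /\
   (forall y j s', s = (y, j) :: s' -> ~ 0 < zs y j -> 0 < w y j).
Proof.
move=> hs hl.
set d := delta x 1 s.
set lam := fmin (fun e : 'I_n * 'I_m => d e.1 e.2 < 0)
                (fun e => zs e.1 e.2 / - d e.1 e.2) 1 (enum [set: 'I_n * 'I_m]).
have hlam : 0 < lam.
  apply: fmin_gt0 => // -[i j] /= hd; rewrite divr_gt0 ?oppr_gt0 //.
  exact: (delta_neg (g := 1) _ hs hd).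
have [zpos zsum] := zs_alloc.
exists lam => //; exists (zs + lam *: d); split; [split|split].
- move=> i j; rewrite !mxE; case: (ltP (d i j) 0) => hd; last first.
    by rewrite addr_ge0 // mulr_ge0 // ltW.
  have : lam <= zs i j / - d i j.
    by apply: (@fmin_le _ _ _ _ _ _ (i, j)) => //; rewrite mem_enum inE.
  rewrite ler_pdivlMr ?oppr_gt0 // mulrN => h.
  lra.
- move=> j; under eq_bigr => i _ do rewrite !mxE.
  by rewrite big_split /= zsum -mulr_sumr colsum_delta mulr0 addr0.
- move=> i; rewrite !ffunE.
  under eq_bigr => j _ do rewrite !mxE mulrDr.
  rewrite big_split /=; congr (_ + _).
  under eq_bigr => j _ do rewrite mulrCA.
  by rewrite -mulr_sumr util_delta hl; ring.
- move=> y j s' e hy; rewrite !mxE.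
  have hs' : pvalid x ((y, j) :: s') by rewrite -e.
  have hd := delta_target ltr01 hs' hy.
  rewrite /d e in hd *.
  by rewrite ltr_wpDl ?zpos // mulr_gt0.
Qed.

Lemma cycle_ge1 x s : pvalid x s -> lastp x s = x -> 1 <= prodp x s.
Proof.
move=> hs hl; have [c hc [w [hw [hu _]]]] := cycle_w hs hl.
rewrite leNgt; apply/negP => hp.
have hge : forall i, util v zs i <= util v w i.
  move=> i; rewrite hu lerDl mulr_ge0 ?ler0n // mulr_ge0 ?ltW //; lra.
have := zs_po hw hge x; rewrite hu eqxx mulr1 gerDl leNgt mulr_gt0 //.
by rewrite subr_gt0.
Qed.

Lemma cycle_S x y j s : pvalid x ((y, j) :: s) -> lastp x ((y, j) :: s) = x ->
  prodp x ((y, j) :: s) <= 1 -> 0 < zs y j.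
Proof.
move=> hs hl hp; have [c hc [w [hw [hu ht]]]] := cycle_w hs hl.
have h1 := cycle_ge1 hs hl.
have hP : prodp x ((y, j) :: s) = 1 by apply/eqP; rewrite eq_le hp h1.
have hue : util v w = util v zs.
  by apply/ffunP => i; rewrite hu hP subrr mulr0 mul0r addr0.
case: (ltP 0 (zs y j)) => // hle.
have hy : ~ 0 < zs y j by rewrite ltNge hle.
by have := zs_max hw hue (ht y j s erefl hy); rewrite ltNge hle.
Qed.

Definition valid x s := pvalid x s && uniq (x :: map fst s).
Definition amin := fmin predT (fun e : 'I_n * 'I_m => a e.1 e.2) 1 (enum [set: 'I_n * 'I_m]).
Definition amax := 1 + \sum_(e : 'I_n * 'I_m) a e.1 e.2.
Definition rho := amin / amax.

Lemma amin_gt0 : 0 < amin.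
Proof. by apply: fmin_gt0 => // e _; apply: a_gt0. Qed.
Lemma amin_le1 : amin <= 1.
Proof. exact: fmin_le_x0. Qed.
Lemma amax_ge1 : 1 <= amax.
Proof. by rewrite lerDl sumr_ge0 // => e _; apply: normr_ge0. Qed.
Lemma rho_gt0 : 0 < rho.
Proof. by rewrite divr_gt0 ?amin_gt0 // (lt_le_trans ltr01 amax_ge1). Qed.
Lemma rho_le1 : rho <= 1.
Proof.
have h := amax_ge1; rewrite ler_pdivrMr ?(lt_le_trans ltr01 h) // mul1r.
exact: le_trans amin_le1 h.
Qed.

Lemma ratio_ge x y j : rho <= a y j / a x j.
Proof.
have hmin : amin <= a y j.
  by apply: (@fmin_le _ _ _ (fun e : 'I_n * 'I_m => a e.1 e.2) _ _ (y, j)); rewrite ?mem_enum ?inE.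
have hmax : a x j <= amax.
  rewrite /amax (bigD1 (x, j)) //=.
  have : 0 <= \sum_(e | e != (x, j)) a e.1 e.2 by rewrite sumr_ge0 // => e _; apply: normr_ge0.
  lra.
have hx := a_gt0 x j; have hy := a_gt0 y j.
have hM : 0 < amax by apply: lt_le_trans ltr01 amax_ge1.
rewrite /rho ler_pdivrMr // mulrAC ler_pdivlMr //.
apply: (@le_trans _ _ (amin * amax)).
  by apply: ler_wpM2l => //; apply: ltW; apply: amin_gt0.
by apply: ler_wpM2r => //; apply: ltW.
Qed.

Lemma prodp_ge x s : rho ^+ size s <= prodp x s.
Proof.
elim: s x => [|[y j] s IH] x /=; first by rewrite expr0.
rewrite exprS; apply: ler_pM; rewrite ?ratio_ge ?IH //.
  exact: (ltW rho_gt0).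
by apply: exprn_ge0; apply: ltW; apply: rho_gt0.
Qed.

Lemma pvalid_cat x s1 s2 : pvalid x (s1 ++ s2) = pvalid x s1 && pvalid (lastp x s1) s2.
Proof. by elim: s1 x => [|[y j] s1 IH] x //=; rewrite IH andbA. Qed.
Lemma prodp_cat x s1 s2 : prodp x (s1 ++ s2) = prodp x s1 * prodp (lastp x s1) s2.
Proof. by elim: s1 x => [|[y j] s1 IH] x /=; rewrite ?mul1r // IH mulrA. Qed.
Lemma lastp_cat x s1 s2 : lastp x (s1 ++ s2) = lastp (lastp x s1) s2.
Proof. by rewrite /lastp map_cat last_cat. Qed.

Lemma split_at x y (p : seq ('I_n * 'I_m)) : x \in map fst p ->
  exists p1 p2, p = p1 ++ p2 /\ lastp y p1 = x.
Proof.
elim: p y => [|[y' j'] p IH] y //=; rewrite in_cons => /orP [/eqP ->| hx].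
  by exists [:: (y', j')], p.
have [p1 [p2 [-> hl]]] := IH y' hx.
by exists ((y', j') :: p1), p2.
Qed.

Lemma valid_size x s : valid x s -> (size s <= n)%N.
Proof.
case/andP => _ hu.
have := card_uniqP hu => /= e.
have := max_card (mem (x :: map fst s)); rewrite e card_ord /= size_map.
by move/ltnW.
Qed.

Variable i0 : 'I_n.
Definition Mbig := 2 / rho ^+ n.+1.
Definition hh (y : 'I_n) := if y == i0 then 1 else Mbig.
Definition cost x s := prodp x s * hh (lastp x s).
Definition D x := fmin (valid x) (cost x) (cost x [::]) (allseqs _ n).


Lemma rho_exp k N : (k <= N)%N -> rho ^+ N <= rho ^+ k.
Proof.
move=> hk; rewrite -(subnKC hk) exprD.
have h0 := ltW rho_gt0.
apply: ler_piMr; first exact: exprn_ge0.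
exact: exprn_ile1 h0 rho_le1.
Qed.

Lemma Mbig_gt0 : 0 < Mbig.
Proof. by rewrite divr_gt0 // exprn_gt0 // rho_gt0. Qed.
Lemma hh_gt0 y : 0 < hh y.
Proof. by rewrite /hh; case: ifP => _ //; apply: Mbig_gt0. Qed.
Lemma cost_gt0 x s : 0 < cost x s.
Proof. by rewrite mulr_gt0 ?prodp_gt0 ?hh_gt0. Qed.

Lemma D_le x s : valid x s -> D x <= cost x s.
Proof.
move=> hs; apply: (@fmin_le _ _ _ _ _ _ s) => //.
by apply: mem_allseqs; apply: valid_size hs.
Qed.

Lemma D_att x : exists s, valid x s /\ D x = cost x s.
Proof.
rewrite /D; case: (fmin_att (valid x) (cost x) (cost x [::]) (allseqs _ n)) => [->|[s [hs ->]]].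
  by exists [::]; split => //; rewrite /valid /= andbT.
by exists s.
Qed.

Lemma D_gt0 x : 0 < D x.
Proof. by have [s [_ ->]] := D_att x; apply: cost_gt0. Qed.

Lemma D_tri x y j : 0 < zs x j -> D x * a x j <= D y * a y j.
Proof.
move=> hxj; have [p [hp ->]] := D_att y.
have hax := a_gt0 x j; have hay := a_gt0 y j.
case: (eqVneq x y) => [exy|nxy].
  by rewrite -exy; apply: ler_wpM2r; [apply: ltW | apply: D_le; rewrite exy].
case hxp : (x \in map fst p).
  have [p1 [p2 [ep hl]]] := split_at y hxp.
  move: hp; rewrite /valid ep pvalid_cat map_cat => /andP [/andP [hp1 hp2] hu].
  have hc : pvalid x ((y, j) :: p1) by rewrite /= hxj hp1.
  have hcl : lastp x ((y, j) :: p1) = x by [].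
  have g1 := cycle_ge1 hc hcl; rewrite /= in g1.
  have hxin : x \in map fst p1.
    have := mem_last y (map fst p1); rewrite -/(lastp y p1) hl in_cons.
    by rewrite (negbTE nxy).
  have hv2 : valid x p2.
    rewrite /valid -hl hp2 /= hl.
    move: hu => /= /andP [_]; rewrite cat_uniq => /and3P [_ hh2 ->].
    rewrite andbT; apply/negP => hx2; move/negP: hh2; apply.
    by apply/hasP; exists x.
  have hD := D_le hv2.
  have -> : cost y (p1 ++ p2) = prodp y p1 * cost x p2.
    by rewrite /cost prodp_cat lastp_cat hl mulrA.
  have hc2 := cost_gt0 x p2; have hq := prodp_gt0 y p1.
  have hDx := D_gt0 x.
  have g2 : a x j <= a y j * prodp y p1.
    by move: g1; rewrite mulrAC ler_pdivlMr // mul1r.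
  nra.
have hvx : valid x ((y, j) :: p).
  move: hp; rewrite /valid /= hxj => /andP [-> ->]; rewrite andbT /= in_cons.
  by rewrite negb_or nxy hxp.
have := D_le hvx; rewrite /cost /lastp /= -/(lastp y p) -mulrA -/(cost y p).
rewrite -ler_pdivlMr // => h; apply: le_trans h _.
rewrite /cost le_eqVlt; apply/orP; left; apply/eqP; field; by rewrite lt0r_neq0.
Qed.

Lemma D_strict j i1 : 0 < zs i0 j -> ~ 0 < zs i1 j -> D i0 * a i0 j < D i1 * a i1 j.
Proof.
move=> h0 h1.
have hD0 : D i0 <= 1.
  by have := @D_le i0 [::] erefl; rewrite /cost /hh /lastp /= eqxx mulr1.
have hDp := D_gt0 i0.
have [p [hp ->]] := D_att i1.
have ha0 := a_gt0 i0 j; have ha1 := a_gt0 i1 j.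
have hpv : pvalid i0 ((i1, j) :: p) by move: hp; rewrite /= h0 => /andP [].
have hq := prodp_gt0 i1 p.
case: (eqVneq (lastp i1 p) i0) => hl.
  have hl' : lastp i0 ((i1, j) :: p) = i0 by [].
  have hP : 1 < prodp i0 ((i1, j) :: p).
    rewrite ltNge; apply/negP => hle; apply: h1; exact: cycle_S hpv hl' hle.
  rewrite /= mulrAC ltr_pdivlMr // mul1r in hP.
  rewrite /cost hl /hh eqxx mulr1.
  nra.
rewrite /cost /hh (negbTE hl).
have hs := valid_size hp.
have hge := prodp_ge i0 ((i1, j) :: p).
have hpow := rho_exp (k := (size ((i1, j) :: p))) (N := n.+1) hs.
have hrn : rho ^+ n.+1 != 0 by rewrite lt0r_neq0 // exprn_gt0 // rho_gt0.
have hM : rho ^+ n.+1 * Mbig = 2 by rewrite /Mbig mulrCA divff ?mulr1.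
have hMp := Mbig_gt0.
have hge2 : rho ^+ n.+1 * `|v i0 j| <= `|v i1 j| * prodp i1 p.
  by have := le_trans hpow hge; rewrite /= mulrAC ler_pdivlMr.
have hr := exprn_gt0 n.+1 rho_gt0.
have h3 : rho ^+ n.+1 * `|v i0 j| * Mbig <= `|v i1 j| * prodp i1 p * Mbig.
  by apply: ler_wpM2r; [exact: ltW | exact: hge2].
rewrite mulrAC hM in h3.
nra.
Qed.

End Paths.

Lemma mww_zs (R : rcfType) (n m : nat) (v zs : 'M[R]_(n, m))
  (hv : forall i j, v i j < 0) (ha : is_alloc zs)
  (hpo : forall w, is_alloc w -> (forall i, util v zs i <= util v w i) ->
     forall i, util v w i <= util v zs i)
  (hmax : forall w, is_alloc w -> util v w = util v zs ->
     forall i j, 0 < w i j -> 0 < zs i j) :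
  in_MWW v (cons_graph zs).
Proof.
pose tau i := \sum_(i0 < n) D v zs i0 i.
exists tau; split.
  move=> i; rewrite /tau (bigD1 i) //=.
  have := D_gt0 zs hv i i.
  have : 0 <= \sum_(i0 < n | i0 != i) D v zs i0 i.
    by apply: sumr_ge0 => k _; apply: ltW; apply: D_gt0.
  lra.
apply/setP => -[i j]; rewrite !inE /=.
apply/idP/idP.
  move=> hij; apply/forallP => i'.
  rewrite /tau !mulr_suml; apply: ler_sum => i0 _; exact: D_tri.
move=> /forallP h.
case: (ltP 0 (zs i j)) => // hle.
have [i0 hi0] : exists i0, 0 < zs i0 j.
  case: (pickP (fun i0 => 0 < zs i0 j)) => [i0 hi0|hnone]; first by exists i0.
  have := (ha.2 j); have : \sum_(k < n) zs k j <= 0.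
    by apply: sumr_le0 => k _; rewrite leNgt hnone.
  lra.
have hnz : ~ 0 < zs i j by rewrite ltNge hle.
have hlt : tau i0 * `|v i0 j| < tau i * `|v i j|.
  rewrite /tau !mulr_suml (bigD1 i0) //= [X in _ < X](bigD1 i0) //=.
  apply: ltr_leD; first exact: (D_strict hv ha hpo hmax hi0 hnz).
  by apply: ler_sum => k _; apply: D_tri.
by have := h i0; rewrite leNgt hlt.
Qed.

Lemma part1 (R : rcfType) (n m : nat) (v : 'M[R]_(n, m))
  (hv : forall i j, v i j < 0) (u : {ffun 'I_n -> R}) :
  in_Ustar v u -> exists z, is_alloc z /\ util v z = u /\ in_MWW v (cons_graph z).
Proof.
case=> z0 [[ha0 hpo0] hu0].
pose P (e : 'I_n * 'I_m) (w : 'M[R]_(n, m)) := is_alloc w /\ util v w = u /\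
  ((exists w', is_alloc w' /\ util v w' = u /\ 0 < w' e.1 e.2) -> 0 < w e.1 e.2).
pose W e := epsilon (inhabits z0) (P e).
have HW : forall e, P e (W e).
  move=> e; apply: epsilon_spec.
  case: (classic (exists w', is_alloc w' /\ util v w' = u /\ 0 < w' e.1 e.2)).
    by case=> w' [h1 [h2 h3]]; exists w'; split => //; split.
  by move=> hn; exists z0; split => //; split => // /hn.
pose N := #|{: 'I_n * 'I_m}|.
pose c : R := (N.+1)%:R^-1.
have hc : 0 < c by rewrite invr_gt0 ltr0n.
have hcN : c * (N.+1)%:R = 1 by rewrite mulVf // pnatr_eq0.
pose zs := \matrix_(i, j) (c * (z0 i j + \sum_e W e i j)).
have hWa : forall e, is_alloc (W e) by move=> e; case: (HW e).
have hWu : forall e, util v (W e) = u by move=> e; case: (HW e) => _ [].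
have hzs_alloc : is_alloc zs.
  split.
    move=> i j; rewrite mxE; apply: mulr_ge0; first exact: ltW.
    apply: addr_ge0; first exact: ha0.1 i j.
    by apply: sumr_ge0 => e _; apply: (hWa e).1.
  move=> j; under eq_bigr => i _ do rewrite mxE.
  rewrite -mulr_sumr big_split /= ha0.2 exchange_big /=.
  under eq_bigr => e _ do rewrite (hWa e).2.
  by rewrite sumr_const -/N addrC natr1 hcN.
have hzs_u : util v zs = u.
  apply/ffunP => i; rewrite ffunE.
  under eq_bigr => j _ do rewrite mxE mulrCA mulrDr mulr_sumr.
  rewrite -mulr_sumr big_split /= exchange_big /=.
  have -> : \sum_(j < m) v i j * z0 i j = u i by rewrite -hu0 ffunE.
  have -> : \sum_e \sum_(j < m) v i j * W e i j = \sum_(e : 'I_n * 'I_m) u i.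
    by apply: eq_bigr => e _; rewrite -(hWu e) ffunE.
  rewrite sumr_const -/N.
  by rewrite -mulr_natr -{1}(mulr1 (u i)) -mulrDr addrC natr1 mulrCA hcN mulr1.
exists zs; split => //; split => //.
apply: mww_zs => //.
- move=> w hw hge i; rewrite leNgt; apply/negP => hlt; apply: hpo0.
  exists w; split => //; split.
    by move=> k; rewrite hu0 -hzs_u.
  by exists i; rewrite hu0 -hzs_u.
- move=> w hw hwu i j hwij.
  have [_ [_ h]] := HW (i, j).
  have hW : 0 < W (i, j) i j by apply: h; exists w; split => //; split => //; rewrite hwu.
  rewrite mxE mulr_gt0 //.
  rewrite (bigD1 (i, j)) //=.
  have : 0 <= \sum_(e | e != (i, j)) W e i j by apply: sumr_ge0 => e _; apply: (hWa e).1.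
  have := ha0.1 i j; lra.
Qed.

Section Comp.
Variables (R : rcfType) (n m : nat) (v : 'M[R]_(n, m)) (b : 'I_n -> R) (z : 'M[R]_(n, m)).
Variable (p : 'I_m -> R).
Hypothesis hv : forall i j, v i j < 0.
Hypothesis hb : forall i, b i < 0.
Hypothesis hza : is_alloc z.
Hypothesis hp : forall j, p j < 0.
Hypothesis hopt : forall i,
      (\sum_(j < m) p j * z i j <= b i) /\
      (forall x : 'I_m -> R, (forall j, 0 <= x j) ->
         \sum_(j < m) p j * x j <= b i ->
         \sum_(j < m) v i j * x j <= util v z i).

Definition earn (y : 'I_m -> R) := - \sum_(j < m) p j * y j.

Lemma earn_ge0 y : (forall j, 0 <= y j) -> 0 <= earn y.
Proof.
move=> hy; rewrite /earn oppr_ge0; apply: sumr_le0 => j _.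
by rewrite nmulr_rle0.
Qed.

Lemma vy_le0 i (y : 'I_m -> R) : (forall j, 0 <= y j) -> \sum_(j < m) v i j * y j <= 0.
Proof. by move=> hy; apply: sumr_le0 => j _; rewrite nmulr_rle0. Qed.

Lemma key i (y : 'I_m -> R) : (forall j, 0 <= y j) ->
  (- b i) * (\sum_(j < m) v i j * y j) <= util v z i * earn y.
Proof.
move=> hy; have he := earn_ge0 hy; have hbi := hb i.
case: (eqVneq (earn y) 0) => [e0|ne0].
  rewrite e0 mulr0; have := vy_le0 i hy; nra.
have hep : 0 < earn y by rewrite lt0r ne0.
pose x j := (- b i) / earn y * y j.
have hx : forall j, 0 <= x j.
  by move=> j; rewrite /x mulr_ge0 // divr_ge0 // ?oppr_ge0 ltW.
have hpx : \sum_(j < m) p j * x j <= b i.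
  have -> : \sum_(j < m) p j * x j = (- b i) / earn y * (- earn y).
    rewrite /earn opprK mulr_sumr; apply: eq_bigr => j _; rewrite /x; ring.
  rewrite mulrN mulfVK ?opprK //.
have := (hopt i).2 x hx hpx.
have -> : \sum_(j < m) v i j * x j = (- b i) / earn y * \sum_(j < m) v i j * y j.
  rewrite mulr_sumr; apply: eq_bigr => j _; rewrite /x; ring.
rewrite mulrAC ler_pdivrMr //.
Qed.

Lemma U_lt0 i : util v z i < 0.
Proof.
have [hb1 _] := hopt i; have hbi := hb i.
have [j hj] : exists j, 0 < z i j.
  case: (pickP (fun j => 0 < z i j)) => [j hj|hn]; first by exists j.
  have : \sum_(j < m) p j * z i j = 0.
    apply: big1 => j _; have := hza.1 i j; rewrite le_eqVlt hn orbF => /eqP <-.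
    by rewrite mulr0.
  lra.
rewrite ffunE (bigD1 j) //=.
have h1 : v i j * z i j < 0 by rewrite nmulr_rlt0.
have : \sum_(k < m | k != j) v i k * z i k <= 0.
  by apply: sumr_le0 => k _; rewrite nmulr_rle0 // hza.1.
lra.
Qed.

Lemma earn_le (w : 'M[R]_(n, m)) i : is_alloc w -> util v z i <= util v w i ->
  earn (fun j => w i j) <= - b i.
Proof.
move=> hw hle; have k := key i (fun j => hw.1 i j).
have hwu : util v w i = \sum_(j < m) v i j * w i j by rewrite ffunE.
rewrite -hwu in k; have hU := U_lt0 i; have hbi := hb i.
have he := earn_ge0 (fun j => hw.1 i j).
nra.
Qed.

Lemma earn_lt (w : 'M[R]_(n, m)) i : is_alloc w -> util v z i < util v w i ->
  earn (fun j => w i j) < - b i.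
Proof.
move=> hw hle; have k := key i (fun j => hw.1 i j).
have hwu : util v w i = \sum_(j < m) v i j * w i j by rewrite ffunE.
rewrite -hwu in k; have hU := U_lt0 i; have hbi := hb i.
have he := earn_ge0 (fun j => hw.1 i j).
nra.
Qed.

Lemma sum_earn (w : 'M[R]_(n, m)) : is_alloc w ->
  \sum_(i < n) earn (fun j => w i j) = - \sum_(j < m) p j.
Proof.
move=> hw; rewrite /earn sumrN exchange_big /=; congr (- _).
by apply: eq_bigr => j _; rewrite -mulr_sumr hw.2 mulr1.
Qed.

Lemma earn_z i : - b i <= earn (fun j => z i j).
Proof. by have [h _] := hopt i; rewrite /earn lerN2. Qed.

Lemma comp_po : pareto_opt v z.
Proof.
split => //; case=> w [hw [hge [k hk]]].
have h1 : \sum_(i < n) earn (fun j => w i j) < \sum_(i < n) (- b i).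
  rewrite (bigD1 k) //= [X in _ < X](bigD1 k) //=.
  apply: ltr_leD; first exact: earn_lt.
  by apply: ler_sum => i _; apply: earn_le.
have h2 : \sum_(i < n) (- b i) <= \sum_(i < n) earn (fun j => z i j).
  by apply: ler_sum => i _; apply: earn_z.
move: h1 h2; rewrite !sum_earn //; lra.
Qed.

Lemma comp_transfer (w : 'M[R]_(n, m)) : is_alloc w -> util v w = util v z ->
  forall i, \sum_(j < m) p j * w i j <= b i.
Proof.
move=> hw hwu.
have hle : forall i, earn (fun j => w i j) <= - b i.
  by move=> i; apply: earn_le => //; rewrite hwu.
have h2 : \sum_(i < n) (- b i) <= \sum_(i < n) earn (fun j => w i j).
  rewrite sum_earn // -(sum_earn hza).
  by apply: ler_sum => i _; apply: earn_z.
have h0 : \sum_(i < n) (- b i - earn (fun j => w i j)) = 0.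
  apply/eqP; rewrite eq_le; apply/andP; split.
    by rewrite sumrB subr_le0.
  by apply: sumr_ge0 => i _; rewrite subr_ge0.
have hF : forall i, true -> 0 <= - b i - earn (fun j => w i j).
  by move=> i _; rewrite subr_ge0.
move=> i; have := psumr_eq0P hF h0 (i := i) erefl.
rewrite /earn => h; lra.
Qed.
End Comp.

Lemma part2 (R : rcfType) (n m : nat) (v : 'M[R]_(n, m))
  (hv : forall i j, v i j < 0) (b : 'I_n -> R) (hb : forall i, b i < 0)
  (u : {ffun 'I_n -> R}) : in_CU v b u ->
  exists z, competitive v b z /\ util v z = u /\ in_MWW v (cons_graph z).
Proof.
case=> z [[hza [p [hp hopt]]] hzu].
have hpo := comp_po hv hb hza hp hopt.
have [w [hw [hwu hm]]] := part1 hv (ex_intro _ z (conj hpo hzu)).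
exists w; split => //; split => //.
exists p; split => // i; split; last by rewrite hwu -hzu; apply: (hopt i).2.
by apply: (comp_transfer hv hb hza hp hopt hw); rewrite hwu.
Qed.

Unset Implicit Arguments.
Theorem lemma2 (R : rcfType) (n m : nat) (v : 'M[R]_(n, m))
  (hv : forall i j, v i j < 0) :
  (forall u : {ffun 'I_n -> R}, in_Ustar v u ->
     exists z, is_alloc z /\ util v z = u /\ in_MWW v (cons_graph z)) /\
  (forall b : 'I_n -> R, (forall i, b i < 0) ->
     forall u : {ffun 'I_n -> R}, in_CU v b u ->
     exists z, competitive v b z /\ util v z = u /\ in_MWW v (cons_graph z)).
Proof.
split; first by move=> u; apply: part1.
by move=> b hb u; apply: part2.
Qed.
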